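(* Let $G$ be a finite abstract simplicial complex. Then $\sum_{x\in G} \omega(x)\big(1-\chi(S(x))\big)=\chi(G)$.
   Context: A finite abstract simplicial complex $G$ is a finite set of non-empty finite sets closed under taking non-empty subsets. $\omega(x)=(-1)^{|x|-1}$ and $\chi(G)=\sum_{x\in G}\omega(x)$. The Barycentric refinement $G_1$ is the graph with vertex set $G$ where $x\neq y$ are adjacent iff $x\subset y$ or $y\subset x$. The unit sphere $S(x)$ is the set of simplices $y\in G$ with $y\subsetneq x$ or $x\subsetneq y$; $\chi(S(x))$ denotes the Euler characteristic of the Whitney (clique) complex of the subgraph of $G_1$ induced on $S(x)$, i.e. $\sum_{K}(-1)^{|K|-1}$ over all non-empty cliques $K$ of that induced subgraph. *)

(* Defs.v *)
From mathcomp Require Import all_boot all_order all_algebra.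
Set Implicit Arguments. Unset Strict Implicit. Unset Printing Implicit Defensive.
Import GRing.Theory Num.Theory.
Local Open Scope ring_scope.

Definition is_complex (T : finType) (G : {set {set T}}) : Prop :=
  set0 \notin G /\
  (forall x y : {set T}, x \in G -> y \subset x -> y != set0 -> y \in G).

Definition omega (U : finType) (x : {set U}) : int := (-1) ^+ (#|x|.-1).

Definition chi (T : finType) (G : {set {set T}}) : int :=
  \sum_(x in G) omega x.

(* unit sphere S(x) in the Barycentric refinement G_1 *)
Definition usphere (T : finType) (G : {set {set T}}) (x : {set T})
  : {set {set T}} :=
  [set y in G | (y \proper x) || (x \proper y)].

(* K is a clique of G_1: distinct elements are comparable by inclusion *)
Definition is_clique (T : finType) (K : {set {set T}}) : bool :=
  [forall x in K, forall y in K, (x != y) ==> ((x \subset y) || (y \subset x))].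

(* Euler characteristic of the Whitney complex of the subgraph of G_1
   induced on V: sum over non-empty cliques K of (-1)^(|K|-1). *)
Definition whitney_chi (T : finType) (V : {set {set T}}) : int :=
  \sum_(K : {set {set T}} | (K != set0) && (K \subset V) && is_clique K)
     omega K.

(* Main.v *)
Require Import Defs.
From mathcomp Require Import all_boot all_order all_algebra zify ring.
Import GRing.Theory Num.Theory.
Local Open Scope ring_scope.
Set Implicit Arguments. Unset Strict Implicit.

Definition sgs (U : finType) (K : {set U}) : int := (-1) ^+ #|K|.

Lemma sgsU1 (U : finType) (a : U) (A : {set U}) : a \notin A -> sgs (a |: A) = - sgs A.
Proof. by move=> aA; rewrite /sgs cardsU1 aA add1n exprS mulN1r. Qed.

Lemma sgs_omega (U : finType) (A : {set U}) : A != set0 -> sgs A = - omega A.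
Proof.
by rewrite -card_gt0 /sgs /omega => /prednK {1}<-; rewrite exprS mulN1r.
Qed.

Lemma omega2 (U : finType) (A : {set U}) : omega A * omega A = 1.
Proof. by have := signrMK (#|A|.-1) (1:int); rewrite mulr1. Qed.

Lemma reindex_add (U : finType) (y : U) (P Q : pred {set U}) (F : {set U} -> int) :
 (forall A, P A -> y \notin A /\ Q (y |: A)) ->
 (forall C, Q C -> y \in C /\ P (C :\ y)) ->
 \sum_(A | P A) F (y |: A) = \sum_(C | Q C) F C.
Proof.
move=> HP HQ.
rewrite [RHS](reindex_onto (fun A => y |: A) (fun C => C :\ y)); last first.
  by move=> C /HQ [yC _]; rewrite setD1K.
apply: eq_bigl => A; apply/idP/andP => [PA|[QA /eqP <-]].
  by have [nyA QA] := HP _ PA; rewrite QA setU1K.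
by have [_] := HQ _ QA.
Qed.


Section Aux.
Variable T : finType.
Implicit Types (x y z : {set T}) (A C K V : {set {set T}}).

Lemma cliqueP K : reflect (forall x y, x \in K -> y \in K -> x != y ->
   (x \subset y) || (y \subset x)) (is_clique K).
Proof.
apply: (iffP forallP) => [H x y xK yK nxy | H x].
  by have /forall_inP/(_ y yK)/implyP := implyP (H x) xK; apply.
apply/implyP => xK; apply/forall_inP => y yK; apply/implyP; exact: H.
Qed.

Lemma clique_sub K K' : K' \subset K -> is_clique K -> is_clique K'.
Proof.
move=> sub /cliqueP H; apply/cliqueP => x y xK yK; apply: H; exact: (subsetP sub).
Qed.

Lemma cliqueU1 y A : is_clique A -> (forall x, x \in A -> (x \subset y) || (y \subset x)) ->
  is_clique (y |: A).
Proof.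
move=> /cliqueP H Hy; apply/cliqueP => a b; rewrite !in_setU1.
case/predU1P => [->|aA]; case/predU1P => [->|bA].
- by rewrite eqxx.
- by move=> _; rewrite orbC; apply: Hy.
- by move=> _; apply: Hy.
- exact: H.
Qed.


Definition Sub y : {set {set T}} := [set w : {set T} | w \subset y].
Definition Bel y : {set {set T}} := [set w : {set T} | w \proper y].

Lemma chain_max C : is_clique C -> C != set0 ->
  exists2 y, y \in C & C \subset Sub y.
Proof.
move=> /cliqueP cl /set0Pn [y0 y0C].
case: (arg_maxnP (fun y => #|y|) y0C) => y yC ymax.
exists y => //; apply/subsetP => w wC; rewrite inE.
have [->|nwy] := eqVneq w y; first exact: subxx.
case/orP: (cl w y wC yC nwy) => // syw.
have: y \proper w by rewrite properEneq eq_sym nwy.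
move/proper_card => lt; have := ymax w wC; change ((#|w| <= #|y|)%N -> w \subset y); by rewrite leqNgt lt.
Qed.

Lemma max_decomp V (F : {set {set T}} -> int) :
  \sum_(C : {set {set T}} | (C \subset V) && is_clique C && (C != set0)) F C =
  \sum_(y in V) \sum_(A : {set {set T}} | (A \subset V :&: Bel y) && is_clique A) F (y |: A).
Proof.
rewrite (eq_bigr (fun C : {set {set T}} => \sum_(y in V | (y \in C) && (C \subset Sub y)) F C)); last first.
  move=> C /andP [/andP [CV cl] ne].
  have [y yC Cy] := chain_max cl ne.
  rewrite (big_pred1 y) // => y'; rewrite /=.
  apply/idP/eqP => [/andP [_ /andP [y'C Cy']]|->]; last first.
    by rewrite (subsetP CV) ?yC ?Cy.
  apply/eqP; rewrite eqEsubset.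
  have := subsetP Cy y' y'C; have := subsetP Cy' y yC; rewrite !inE => -> ->//.
under eq_bigr do rewrite big_mkcondr.
rewrite exchange_big; apply: eq_bigr => y yV.
rewrite -big_mkcondr; symmetry; apply: reindex_add.
  move=> A /andP [AV clA]; split.
    by apply/negP => /(subsetP AV); rewrite !inE properxx andbF.
  rewrite setU11 /=; apply/andP; split; last first.
    apply/subsetP => w; rewrite !inE => /predU1P [->|/(subsetP AV)].
      exact: subxx.
    by rewrite !inE => /andP [_ /proper_sub].
  apply/andP; split; last by apply/set0Pn; exists y; rewrite setU11.
  apply/andP; split.
    apply/subsetP => w; rewrite !inE => /predU1P [->//|/(subsetP AV)].
    by rewrite !inE => /andP [].
  apply: cliqueU1 => // w /(subsetP AV); rewrite !inE => /andP [_ /proper_sub ->].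
  by [].
move=> C /andP [/andP [/andP [CV clC] _] /andP [yC Cy]]; split => //.
apply/andP; split; last by apply: clique_sub clC; exact: subD1set.
apply/subsetP => w; rewrite !inE => /andP [nwy wC].
rewrite (subsetP CV) //= properEneq nwy /=.
by have := subsetP Cy w wC; rewrite inE.
Qed.


Lemma alt0 y : y != set0 -> \sum_(z : {set T} | z \subset y) sgs z = 0.
Proof.
case/set0Pn => a ay.
set S := (X in X = 0).
pose t z : {set T} := if a \in z then z :\ a else a |: z.
have tK : involutive t.
  move=> z; rewrite /t; have [az|naz] := boolP (a \in z).
    by rewrite setD11 setD1K.
  by rewrite setU11 setU1K.
have HS : S = - S.
  rewrite {1}/S (reindex_inj (inv_inj tK)) /S -sumrN.
  apply: eq_big => z.
    rewrite /t; case: ifP => az.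
      by rewrite subDset (setUidPr _) // sub1set.
    by rewrite subUset sub1set ay.
  move=> _; rewrite /t; case: ifP => az.
    by rewrite -{2}(setD1K az) sgsU1 ?opprK // !inE eqxx.
  by rewrite sgsU1 ?az.
by move/eqP: HS; rewrite -subr_eq0 opprK -mulr2n mulrn_eq0 /= => /eqP.
Qed.

Definition Down y : {set {set T}} := [set z : {set T} | (z != set0) && (z \proper y)].

Lemma sum_Down y : y != set0 -> \sum_(z in Down y) omega z = 1 - omega y.
Proof.
move=> ny; have := alt0 ny.
rewrite (bigD1 set0) ?sub0set //= (bigD1 y) /=; last by rewrite subxx ny.
rewrite (sgs_omega ny) {1}/sgs cards0 expr0.
have -> : \sum_(i : {set T} | (i \subset y) && (i != set0) && (i != y)) sgs i =
   - \sum_(z in Down y) omega z.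
  rewrite -sumrN; apply: eq_big => z.
    by rewrite !inE properEneq; case: (z \subset y); case: (z != y); case: (z != set0).
  by case/andP => /andP [_ nz] _; rewrite -(sgs_omega nz).
move: (\sum_(z in Down y) omega z) (omega y) => a b; lia.
Qed.


Lemma Down_Bel y z : z \in Down y -> Down y :&: Bel z = Down z.
Proof.
rewrite inE => /andP [_ zy]; apply/setP => w; rewrite !inE.
case: (w != set0) => //=; apply/andP/idP => [[]//|wz]; split => //.
exact: proper_trans wz zy.
Qed.

Lemma notin_Down z A : A \subset Down z -> z \notin A.
Proof. by move=> AD; apply/negP => /(subsetP AD); rewrite inE properxx andbF. Qed.

Lemma clique0 : is_clique (set0 : {set {set T}}).
Proof. by apply/cliqueP => x y; rewrite inE. Qed.

Lemma chains_split V (F : {set {set T}} -> int) :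
  \sum_(A : {set {set T}} | (A \subset V) && is_clique A) F A =
  F set0 + \sum_(C : {set {set T}} | (C \subset V) && is_clique C && (C != set0)) F C.
Proof. by rewrite (bigD1 set0) ?sub0set ?clique0. Qed.

Definition gD y := \sum_(A : {set {set T}} | (A \subset Down y) && is_clique A) sgs A.
Definition kD y := \sum_(A : {set {set T}} | (A \subset Down y) && is_clique A)
   sgs A * \sum_(x in A) omega x.

Lemma Down_ne y z : z \in Down y -> z != set0.
Proof. by rewrite inE => /andP []. Qed.

Lemma Down_lt y z : z \in Down y -> (#|z| < #|y|)%N.
Proof. by rewrite inE => /andP [_ /proper_card]. Qed.

Lemma gD_eq y : y != set0 -> gD y = omega y.
Proof.
move: {2}#|y| (leqnn #|y|) => n; elim: n y => [|n IH] y.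
  by rewrite leqn0 cards_eq0 => /eqP ->; rewrite eqxx.
move=> yn ny; rewrite /gD chains_split max_decomp /sgs cards0 expr0 -/(sgs _).
have -> : \sum_(z in Down y) \sum_(A : {set {set T}} | (A \subset Down y :&: Bel z) && is_clique A)
      sgs (z |: A) = - \sum_(z in Down y) omega z.
  rewrite -sumrN; apply: eq_bigr => z zD.
  rewrite (Down_Bel zD) -(IH z) ?(Down_ne zD) //; last first.
    by have := Down_lt zD; lia.
  rewrite /gD -sumrN; apply: eq_bigr => A /andP [AD _].
  by rewrite sgsU1 // notin_Down.
rewrite sum_Down //; lia.
Qed.

Lemma kD_eq y : y != set0 -> kD y = omega y - 1.
Proof.
move: {2}#|y| (leqnn #|y|) => n; elim: n y => [|n IH] y.
  by rewrite leqn0 cards_eq0 => /eqP ->; rewrite eqxx.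
move=> yn ny; rewrite /kD chains_split max_decomp big_set0 mulr0 add0r.
have -> : \sum_(z in Down y) \sum_(A : {set {set T}} | (A \subset Down y :&: Bel z) && is_clique A)
      sgs (z |: A) * \sum_(x in z |: A) omega x = - \sum_(z in Down y) omega z.
  rewrite -sumrN; apply: eq_bigr => z zD.
  rewrite (Down_Bel zD).
  transitivity (- (omega z * gD z + kD z)); last first.
    rewrite gD_eq ?(Down_ne zD) // omega2 IH ?(Down_ne zD) //; last first.
      by have := Down_lt zD; lia.
    lia.
  rewrite /gD /kD mulr_sumr -big_split -sumrN; apply: eq_bigr => A /andP [AD _].
  rewrite sgsU1 ?notin_Down // big_setU1 ?notin_Down //=.
  ring.
rewrite sum_Down //; lia.
Qed.


Lemma one_sub_wc V : 1 - whitney_chi V =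
  \sum_(A : {set {set T}} | (A \subset V) && is_clique A) sgs A.
Proof.
rewrite chains_split.
have -> : sgs (set0 : {set {set T}}) = 1 by rewrite /sgs cards0 expr0.
rewrite /whitney_chi -sumrN.
congr (_ + _); apply: eq_big => C.
  by rewrite [in RHS]andbC andbA.
by move=> /andP [/andP [ne _] _]; rewrite sgs_omega ?opprK.
Qed.

Lemma sphere_eq (G : {set {set T}}) x : x \in G ->
  \sum_(A : {set {set T}} | (A \subset usphere G x) && is_clique A) sgs A =
  - \sum_(C : {set {set T}} | (C \subset G) && is_clique C && (x \in C)) sgs C.
Proof.
move=> xG.
have nx : forall A : {set {set T}}, A \subset usphere G x -> x \notin A.
  by move=> A AS; apply/negP => /(subsetP AS); rewrite inE properE subxx /= andbF.
transitivity (- \sum_(A : {set {set T}} | (A \subset usphere G x) && is_clique A) sgs (x |: A)).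
  rewrite -sumrN; apply: eq_bigr => A /andP [AS _].
  by rewrite sgsU1 ?opprK ?nx.
congr (- _); apply: reindex_add.
  move=> A /andP [AS clA]; split; first exact: nx.
  rewrite setU11 andbT; apply/andP; split.
    rewrite subUset sub1set xG /=; apply/subsetP => w /(subsetP AS).
    by rewrite inE => /andP [].
  apply: cliqueU1 => // w /(subsetP AS); rewrite inE => /andP [_].
  by case/orP => /proper_sub ->; rewrite ?orbT.
move=> C /andP [/andP [CG clC] xC]; split => //.
apply/andP; split; last by apply: clique_sub clC; exact: subD1set.
apply/subsetP => w; rewrite !inE => /andP [nwx wC].
rewrite (subsetP CG) //= !properEneq nwx eq_sym nwx /=.
by move/cliqueP: clC => /(_ w x wC xC nwx).
Qed.

Lemma complex_Bel (G : {set {set T}}) y : is_complex G -> y \in G -> G :&: Bel y = Down y.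
Proof.
move=> [n0 cl] yG; apply/setP => w; rewrite !inE.
apply/andP/andP => [[wG ->]|[nw wy]]; last first.
  by split => //; apply: (cl y) => //; exact: proper_sub.
by split => //; apply/negP => /eqP w0; move: n0; rewrite -w0 wG.
Qed.

End Aux.

Theorem mainTheorem8 (T : finType) (G : {set {set T}}) :
  is_complex G ->
  \sum_(x in G) omega x * (1 - whitney_chi (usphere G x)) = chi G.
Proof.
move=> cG.
have n0 := cG.1.
transitivity (- \sum_(x in G) \sum_(C : {set {set T}} | (C \subset G) && is_clique C)
    (if x \in C then omega x * sgs C else 0)).
  rewrite -sumrN; apply: eq_bigr => x xG.
  rewrite one_sub_wc sphere_eq // mulrN mulr_sumr big_mkcondr.
  done.
rewrite exchange_big /=.
transitivity (- \sum_(C : {set {set T}} | (C \subset G) && is_clique C)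
    (\sum_(x in C) omega x) * sgs C).
  congr (- _); apply: eq_bigr => C /andP [CG _].
  rewrite -big_mkcondr mulr_suml; apply: eq_bigl => x.
  by case xC: (x \in C); rewrite ?andbT ?andbF // (subsetP CG).
rewrite chains_split big_set0 mul0r add0r max_decomp /chi -sumrN.
apply: eq_bigr => y yG.
rewrite (complex_Bel cG yG).
have ny : y != set0 by apply/negP => /eqP y0; move: n0; rewrite -y0 yG.
transitivity (omega y * gD y + kD y); last first.
  by rewrite gD_eq // omega2 kD_eq //; lia.
rewrite /gD /kD mulr_sumr -big_split -sumrN; apply: eq_bigr => A /andP [AD _].
rewrite sgsU1 ?notin_Down // big_setU1 ?notin_Down //=.
ring.
Qed.
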